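(* Let $X$ be an exponential vector space over $\mathbb K$ and $V$ a vector space over $\mathbb K$. Then the evs $X\times V$ has a basis if and only if $X$ has a basis. Moreover (when these bases exist) $\dim(X\times V)=[\dim(X\smallsetminus X_0):\dim X_0+\dim V]$.
   Context: $\mathbb K$ is $\mathbb R$ or $\mathbb C$. An exponential vector space (evs) over a field $K$ is a partially ordered set $(X,\leq)$ with a binary operation $+$ on $X$ and a map $K\times X\to X$, $(\alpha,x)\mapsto \alpha x$, such that: (A1) $(X,+)$ is a commutative semigroup with identity $\theta$; (A2) $x\leq y$ implies $x+z\leq y+z$ and $\alpha x\leq \alpha y$ for all $z\in X$, $\alpha\in K$; (A3) $\alpha(x+y)=\alpha x+\alpha y$, $\alpha(\beta x)=(\alpha\beta)x$, $(\alpha+\beta)x\leq \alpha x+\beta x$, $1x=x$; (A4) $\alpha x=\theta$ iff $\alpha=0$ or $x=\theta$; (A5) $x+(-1)x=\theta$ iff $x\in X_0$, where $X_0:=\{z\in X: y\not\leq z \text{ for all } y\in X\smallsetminus\{z\}\}$ (the set of minimal elements, called the primitive space; it is a vector space over $K$); (A6) for each $x\in X$ there is $p\in X_0$ with $p\leq x$. For $x\in X\smallsetminus X_0$ let $L(x):=\{z\in X: z\geq \alpha x+p \text{ for some } \alpha\in K\smallsetminus\{0\},\ p\in X_0\}$. A subset $B\subseteq X\smallsetminus X_0$ generates $X\smallsetminus X_0$ if $X\smallsetminus X_0=\bigcup_{b\in B}L(b)$. Elements $x,y\in X\smallsetminus X_0$ are orderly dependent if $x\in L(y)$ or $y\in L(x)$,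 and orderly independent otherwise; $B$ is orderly independent if any two distinct members are orderly independent. A basis of $X\smallsetminus X_0$ is an orderly independent generating subset of $X\smallsetminus X_0$; ''$X$ has a basis'' means $X\smallsetminus X_0$ has a basis. All bases of $X\smallsetminus X_0$ have the same cardinality, denoted $\dim(X\smallsetminus X_0)$; $\dim X_0$ is the vector-space dimension of $X_0$ (taken as $0$ if $X_0=\{\theta\}$), and $\dim X:=[\dim(X\smallsetminus X_0):\dim X_0]$. The evs $X\times V$ has operations $(x_1,e_1)+(x_2,e_2)=(x_1+x_2,e_1+e_2)$, $\alpha(x,e)=(\alpha x,\alpha e)$, and order $(x_1,e_1)\leq(x_2,e_2)$ iff $x_1\leq x_2$ and $e_1=e_2$; its primitive space is $X_0\times V$. *)

(* Defs.v *)
From mathcomp Require Import all_boot all_algebra.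
From mathcomp Require Import boolp classical_sets cardinality reals.
From mathcomp Require Import complex.

Set Implicit Arguments.
Unset Strict Implicit.
Unset Printing Implicit Defensive.

Import GRing.Theory.
Local Open Scope ring_scope.
Local Open Scope classical_set_scope.

Record evs_ops (K T : Type) := EvsOps {
  ev_le : T -> T -> Prop;
  ev_add : T -> T -> T;
  ev_zero : T;
  ev_smul : K -> T -> T }.

Section EVS.
Variables (K : fieldType) (T : Type) (o : evs_ops K T).

Local Notation le := (ev_le o).
Local Notation add := (ev_add o).
Local Notation th := (ev_zero o).
Local Notation sm := (ev_smul o).

(* primitive space X_0 : the minimal elements *)
Definition prim : set T := fun z => forall y, y <> z -> ~ le y z.

Record is_evs : Prop := IsEvs {
  ev_le_refl : forall x, le x x;
  ev_le_trans : forall x y z, le x y -> le y z -> le x z;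
  ev_le_anti : forall x y, le x y -> le y x -> x = y;
  ev_addA : forall x y z, add x (add y z) = add (add x y) z;
  ev_addC : forall x y, add x y = add y x;
  ev_add0 : forall x, add th x = x;
  ev_le_add : forall x y z, le x y -> le (add x z) (add y z);
  ev_le_smul : forall (a : K) x y, le x y -> le (sm a x) (sm a y);
  ev_smulD : forall (a : K) x y, sm a (add x y) = add (sm a x) (sm a y);
  ev_smulA : forall (a b : K) x, sm a (sm b x) = sm (a * b) x;
  ev_smul_addle : forall (a b : K) x, le (sm (a + b) x) (add (sm a x) (sm b x));
  ev_smul1 : forall x, sm 1 x = x;
  ev_smul_eq0 : forall (a : K) x, sm a x = th <-> (a = 0 \/ x = th);
  ev_inv_prim : forall x, add x (sm (-1) x) = th <-> prim x;
  ev_prim_below : forall x, exists2 p, prim p & le p x }.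

Definition Lset (x : T) : set T :=
  fun z => exists a : K, exists p : T, [/\ a <> 0, prim p & le (add (sm a x) p) z].

Definition generates (B : set T) : Prop :=
  B `<=` ~` prim /\ ~` prim = \bigcup_(b in B) Lset b.

Definition orderly_dep (x y : T) : Prop := Lset y x \/ Lset x y.

Definition orderly_indep (B : set T) : Prop :=
  forall x y, B x -> B y -> x <> y -> ~ orderly_dep x y.

Definition evs_basis (B : set T) : Prop :=
  B `<=` ~` prim /\ orderly_indep B /\ generates B.

Definition has_basis : Prop := exists B, evs_basis B.

End EVS.

(* Hamel basis of a subspace U (given as a set, e.g. X_0) of a carrier with a
   vector-space structure given by add, zero, scalar multiplication. *)
Section Hamel.
Variables (K : fieldType) (T : Type) (add : T -> T -> T) (zero : T)
          (sm : K -> T -> T).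

Definition lincomb n (c : 'I_n -> K) (f : 'I_n -> T) : T :=
  \big[add/zero]_(i < n) sm (c i) (f i).

Definition lin_indep (B : set T) : Prop :=
  forall n (f : 'I_n -> T) (c : 'I_n -> K), injective f -> (forall i, B (f i)) ->
    lincomb c f = zero -> forall i, c i = 0.

Definition spans (U B : set T) : Prop :=
  forall p, U p -> exists n (f : 'I_n -> T) (c : 'I_n -> K),
    (forall i, B (f i)) /\ p = lincomb c f.

Definition hamel_basis (U B : set T) : Prop :=
  B `<=` U /\ lin_indep B /\ spans U B.

End Hamel.

Definition prim_hamel_basis (K : fieldType) T (o : evs_ops K T) (B : set T) :=
  hamel_basis (ev_add o) (ev_zero o) (ev_smul o) (prim o) B.

Definition vs_hamel_basis (K : fieldType) (V : lmodType K) (B : set V) :=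
  hamel_basis (@GRing.add V) (0 : V) (@GRing.scale K V) setT B.

Definition prod_ops (K : fieldType) T (o : evs_ops K T) (V : lmodType K) :
    evs_ops K (T * V) :=
  EvsOps (fun u w : T * V => ev_le o u.1 w.1 /\ u.2 = w.2)
         (fun u w : T * V => (ev_add o u.1 w.1, u.2 + w.2))
         (ev_zero o, 0)
         (fun (a : K) (u : T * V) => (ev_smul o a u.1, a *: u.2)).

(* The dimension statement
   dim (X x V) = [dim (X \ X0) : dim X0 + dim V] is expressed as
   - any basis of (X x V) \ (X x V)_0 is equipotent to any basis of X \ X0;
   - any Hamel basis of (X x V)_0 is equipotent to the disjoint union of a
     Hamel basis of X0 and a Hamel basis of V (cardinal sum). *)
Definition thm8_for (K : fieldType) : Prop :=
  forall (T : Type) (o : evs_ops K T) (V : lmodType K),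
    is_evs o ->
    (has_basis (prod_ops o V) <-> has_basis o) /\
    (forall (B : set T) (B' : set (T * V)),
        evs_basis o B -> evs_basis (prod_ops o V) B' ->
        card_eq B' B /\
        (forall (H : set (T * V)) (H1 : set T) (H2 : set V),
            prim_hamel_basis (prod_ops o V) H ->
            prim_hamel_basis o H1 -> vs_hamel_basis H2 ->
            card_eq H ([set inl x | x in H1] `|` [set inr v | v in H2]))).

(* Main.v *)
From HB Require Import structures.
Require Import Defs.
From mathcomp Require Import all_boot all_algebra.
From mathcomp Require Import boolp classical_sets functions cardinality reals complex.
From mathcomp Require Import zify finmap.
Set Implicit Arguments.
Unset Strict Implicit.
Unset Printing Implicit Defensive.
Import GRing.Theory.
Local Open Scope ring_scope.
Local Open Scope classical_set_scope.
Section Card.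
Local Open Scope card_scope.

Lemma card_le_fun T U (A : set T) (B : set U) (f : T -> U) :
  (forall x, A x -> B (f x)) ->
  (forall x y, A x -> A y -> f x = f y -> x = y) -> A #<= B.
Proof.
elim/Ppointed: U => U in B f *.
  move=> _ _; suff -> : A = set0 by exact: card_ge0.
  apply/seteqP; split => x // Ax.
  have : (f @` A) (f x) by exists x.
  by rewrite (empty_eq0 (f @` A)).
move=> fAB finj; apply/pcard_leP/injfunPex; exists f.
  by move=> x Ax; exact: fAB.
by move=> x y; rewrite !in_setE => Ax Ay; exact: finj.
Qed.

Lemma infinite_prod_le T (A : set T) : infinite_set A -> A `*` [set: nat] #<= A.
Proof.
elim/Ppointed: T => T in A *; first by rewrite emptyE.
move=> Ainf.
have [pi piI] : exists pi : nat * nat -> nat, injective pi.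
  have /card_eqPle [+ _] := card_nat2.
  move=> /pcard_injP [pi piI]; exists pi => x y; apply: piI; by rewrite in_setE.
pose P (M : set (nat -> T)) :=
  (forall s, M s -> injective s /\ forall n, A (s n)) /\
  (forall s t, M s -> M t -> s <> t -> forall i j, s i <> t j).
have [M [[MI Mdisj] Mmax]] : exists M, P M /\ (forall B, M `<` B -> ~ P B).
  apply: Zorn_bigcup => F FP Ftot; split.
    by move=> s [X FX Xs]; exact: (FP X FX).1 s Xs.
  move=> s t [X FX Xs] [Y FY Yt]; case: (Ftot X Y FX FY) => XY.
    exact: (FP Y FY).2 s t (XY s Xs) Yt.
  exact: (FP X FX).2 s t Xs (XY t Yt).
pose D := \bigcup_(s in M) range s.
pose R := A `\` D.
have Rfin : finite_set R.
  apply: contrapT => /infiniteP/pcard_leP/injfunPex [g gR ginj].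
  have gR' : forall n, R (g n) by move=> n; exact: gR.
  apply: (Mmax (M `|` [set g])).
    split; first by move=> s Ms; left.
    move=> h; have Mg := h g (or_intror erefl).
    by case: (gR' 0%N) => _; apply; exists g => //; exists 0%N.
  split.
    move=> s [Ms|->]; first exact: MI.
    split; last by move=> n; case: (gR' n).
    by move=> i j; apply: ginj; rewrite in_setE.
  move=> s t [Ms|->] [Mt|->] st i j.
  - exact: Mdisj.
  - by move=> e; case: (gR' j) => _; apply; exists s => //; exists i.
  - by move=> e; case: (gR' i) => _; apply; exists t => //; exists j.
  - by [].
have [s0 Ms0] : exists s, M s.
  case: (pselect (exists s, M s)) => // nM; exfalso; apply: Ainf.
  apply: sub_finite_set Rfin => x Ax; split => // -[s Ms _]; apply: nM.
  by exists s.
have [r rinj] : exists r : T -> nat, {in R &, injective r}.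
  by apply/pcard_injP; exact: finite_set_countable Rfin.
pose h (xk : T * nat) : T :=
  match pselect (exists sn : (nat -> T) * nat, M sn.1 /\ xk.1 = sn.1 sn.2) with
  | left e => (sval (cid e)).1 (pi (2 * (sval (cid e)).2, xk.2))%N
  | right _ => s0 (pi ((2 * r xk.1).+1, xk.2))%N
  end.
apply: (card_le_fun (f := h)).
  move=> [x k] _; rewrite /h; case: pselect => [e|_].
    by case: (svalP (cid e)) => /MI [_ HA] _; exact: HA.
  by case: (MI s0 Ms0) => _ HA; exact: HA.
move=> [x k] [y l] [/= Ax _] [/= Ay _]; rewrite /h /=.
case: pselect => [e1|n1]; case: pselect => [e2|n2].
- move: (svalP (cid e1)) (svalP (cid e2)).
  set sn := sval (cid e1); set tn := sval (cid e2) => -[M1 ex] [M2 ey] eq.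
  have st : sn.1 = tn.1.
    by apply: contrapT => st; exact: (Mdisj _ _ M1 M2 st _ _ eq).
  move: eq; rewrite st => /(proj1 (MI _ M2)) /piI [] /eqP.
  by rewrite eqn_mul2l /= => /eqP e ->; rewrite ex ey st e.
- move=> eq; exfalso.
  have M1 := proj1 (svalP (cid e1)).
  case: (pselect ((sval (cid e1)).1 = s0)) => st.
    move: eq; rewrite st => /(proj1 (MI _ Ms0)) /piI [] e _; lia.
  exact: (Mdisj _ _ M1 Ms0 st _ _ eq).
- move=> eq; exfalso.
  have M2 := proj1 (svalP (cid e2)).
  case: (pselect ((sval (cid e2)).1 = s0)) => st.
    move: eq; rewrite st => /(proj1 (MI _ Ms0)) /piI [] e _; lia.
  apply: (Mdisj _ _ Ms0 M2 _ _ _ eq) => e; apply: st; by rewrite e.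
- move=> /(proj1 (MI _ Ms0)) /piI [] e ->.
  have rxy : r x = r y by lia.
  have Rx : R x by split => // -[s Ms [n _ e']]; apply: n1; exists (s, n).
  have Ry : R y by split => // -[s Ms [n _ e']]; apply: n2; exists (s, n).
  by rewrite (rinj x y) // in_setE.
Qed.

Lemma card_eq_funs T U (A : set T) (B : set U) (f : T -> U) (g : U -> T) :
  (forall x, A x -> B (f x)) ->
  (forall x y, A x -> A y -> f x = f y -> x = y) ->
  (forall x, B x -> A (g x)) ->
  (forall x y, B x -> B y -> g x = g y -> x = y) -> A #= B.
Proof.
move=> h1 h2 h3 h4; apply: Cantor_Bernstein.
  exact: (card_le_fun h1 h2).
exact: (card_le_fun h3 h4).
Qed.

End Card.
Section Core.
Variables (K : fieldType) (W : lmodType K).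

Definition lcs (s : seq (K * W)) : W := \sum_(p <- s) p.1 *: p.2.
Definition coef (s : seq (K * W)) (x : W) : K := \sum_(p <- s | p.2 == x) p.1.
Definition windep (B : set W) := forall s, (forall p, p \in s -> B p.2) ->
  lcs s = 0 -> forall x, coef s x = 0.
Definition wspan (B : set W) := forall v, exists s,
  (forall p, p \in s -> B p.2) /\ v = lcs s.
Definition wbasis B := windep B /\ wspan B.

Lemma lcs_partition s u : uniq u -> (forall p, p \in s -> p.2 \in u) ->
  lcs s = \sum_(x <- u) coef s x *: x.
Proof.
move=> uu; elim: s => [|p s IH] hs.
  by rewrite /lcs big_nil big1 // => x _; rewrite /coef big_nil scale0r.
rewrite /lcs big_cons -/(lcs s) IH; last by move=> q qs; apply: hs; rewrite inE qs orbT.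
have pu : p.2 \in u by apply: hs; rewrite inE eqxx.
rewrite /coef.
under [RHS]eq_bigr => x _ do rewrite big_cons.
rewrite [RHS](bigD1_seq p.2) //= eqxx scalerDl -addrA; congr (_ + _).
rewrite [in LHS](bigD1_seq p.2) //=; congr (_ + _); apply: eq_bigr => x.
by rewrite eq_sym => /negbTE ->.
Qed.

Lemma lcs_cat s1 s2 : lcs (s1 ++ s2) = lcs s1 + lcs s2.
Proof. by rewrite /lcs big_cat. Qed.

Lemma lcs_cons p s : lcs (p :: s) = p.1 *: p.2 + lcs s.
Proof. by rewrite /lcs big_cons. Qed.

Lemma lcs_nil : lcs [::] = 0.
Proof. by rewrite /lcs big_nil. Qed.

Lemma lcs_scale a s : a *: lcs s = lcs [seq (a * p.1, p.2) | p <- s].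
Proof. by rewrite /lcs big_map scaler_sumr; apply: eq_bigr => p _; rewrite scalerA. Qed.

Lemma coef_cons p s x : coef (p :: s) x = (if p.2 == x then p.1 else 0) + coef s x.
Proof. by rewrite /coef big_cons; case: ifP; rewrite ?add0r. Qed.

Lemma coef_notin s x : (forall p, p \in s -> p.2 != x) -> coef s x = 0.
Proof.
move=> h; rewrite /coef big_hasC //; apply/hasPn => p ps; exact: h.
Qed.

Lemma windep_not0 B : windep B -> ~ B 0.
Proof.
move=> hB B0; have := hB [:: (1, 0)].
have h1 : forall p, p \in [:: (1 : K, 0 : W)] -> B p.2.
  by move=> p; rewrite inE => /eqP ->.
move=> /(_ h1); rewrite lcs_cons lcs_nil scaler0 addr0 => /(_ erefl 0).
by rewrite coef_cons /= eqxx /coef big_nil addr0 => /eqP; rewrite oner_eq0.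
Qed.

Lemma windep0 B : windep B -> forall s, (forall p, p \in s -> B p.2 \/ p.2 = 0) ->
  lcs s = 0 -> forall x, B x -> coef s x = 0.
Proof.
move=> hB s hs s0 x Bx.
have x0 : x != 0 by apply/eqP => x0; apply: (windep_not0 hB); rewrite -x0.
pose s' := [seq p <- s | p.2 != 0].
have e1 : lcs s' = lcs s.
  rewrite /lcs big_filter [RHS](bigID (fun p => p.2 != 0)) /=.
  rewrite [X in _ = _ + X]big1 ?addr0 // => p /negPn/eqP ->; exact: scaler0.
have e2 : coef s' x = coef s x.
  rewrite /coef big_filter_cond; apply: eq_bigl => p.
  by case: (eqVneq p.2 x) => [->|]; rewrite ?x0 ?andbF.
rewrite -e2; apply: hB; last by rewrite e1.
move=> p; rewrite mem_filter => /andP[p0 ps]; case: (hs p ps) => // /eqP.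
by rewrite (negbTE p0).
Qed.

Lemma lin_indep_windep B :
  lin_indep (@GRing.add W) 0 (@GRing.scale K W) B -> windep B.
Proof.
move=> Hli s sB s0 x.
set u := undup [seq p.2 | p <- s].
have uu : uniq u := undup_uniq _.
have su : forall p, p \in s -> p.2 \in u.
  by move=> p ps; rewrite mem_undup; apply: map_f.
case xu: (x \in u); last first.
  by apply: coef_notin => p ps; apply: contraFN xu => /eqP <-; exact: su.
pose f (i : 'I_(size u)) := nth 0 u i.
have finj : injective f.
  by move=> i j /eqP; rewrite nth_uniq // => /eqP; apply: val_inj.
have fB : forall i, B (f i).
  move=> i; have : f i \in u := mem_nth _ (ltn_ord i).
  by rewrite mem_undup => /mapP [p ps ->]; exact: sB.
have := Hli (size u) f (fun i => coef s (f i)) finj fB.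
have -> : lincomb (@GRing.add W) 0 (@GRing.scale K W) (fun i => coef s (f i)) f = 0.
  by rewrite /lincomb -[RHS]s0 (lcs_partition uu su) (big_nth 0) big_mkord.
have xi : (index x u < size u)%N by rewrite index_mem.
move=> /(_ erefl (Ordinal xi)).
by rewrite /f /= nth_index // xu.
Qed.

Lemma spans_wspan B :
  spans (@GRing.add W) 0 (@GRing.scale K W) setT B -> wspan B.
Proof.
move=> hs v; have [n [f [c [fB ->]]]] := hs v I.
exists [seq (c i, f i) | i <- enum 'I_n]; split.
  by move=> p /mapP [i _ ->]; exact: fB.
by rewrite /lcs big_map /lincomb big_enum.
Qed.

Lemma fin_bound B sb sc : windep B -> uniq sb -> (forall b, b \in sb -> B b) ->
  uniq sc -> (forall b, b \in sb -> exists t,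
     (forall p, p \in t -> p.2 \in sc) /\ b = lcs t) ->
  (size sb <= size sc)%N.
Proof.
move=> hB usb sbB usc hsp; rewrite leqNgt; apply/negP => Hlt.
pose m := size sb; pose n := size sc.
have ht : forall i : 'I_m, {t | (forall p, p \in t -> p.2 \in sc) /\ nth 0 sb i = lcs t}.
  by move=> i; apply: cid; apply: hsp; exact: mem_nth.
pose t i := sval (ht i).
pose A : 'M[K]_(m, n) := \matrix_(i, j) coef (t i) (nth 0 sc j).
have rowexp : forall i : 'I_m, nth 0 sb i = \sum_(j < n) A i j *: nth 0 sc j.
  move=> i; rewrite (proj2 (svalP (ht i))) (lcs_partition usc (proj1 (svalP (ht i)))).
  by rewrite (big_nth 0) big_mkord; apply: eq_bigr => j _; rewrite mxE.
have : (0 < \rank (kermx A))%N.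
  by rewrite mxrank_ker subn_gt0; exact: leq_ltn_trans (rank_leq_col A) Hlt.
rewrite lt0n mxrank_eq0 => kA.
have [i0 Hi0] : exists i0, row i0 (kermx A) != 0.
  case/boolP: [exists i, row i (kermx A) != 0] => [/existsP//|/existsPn hn].
  exfalso; move/negP: kA; apply; apply/eqP/row_matrixP => i; rewrite row0.
  by apply/eqP; move: (hn i); rewrite negbK.
set u := row i0 (kermx A).
have uA : u *m A = 0 by apply/sub_kermxP; exact: row_sub.
pose s := [seq (u 0 i, nth 0 sb i) | i <- enum 'I_m].
have s0 : lcs s = 0.
  rewrite /lcs big_map big_enum /=.
  under eq_bigr => i _ do rewrite rowexp scaler_sumr.
  rewrite exchange_big /= big1 // => j _.
  under eq_bigr => i _ do rewrite scalerA.
  rewrite -scaler_suml.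
  have -> : \sum_i u 0 i * A i j = (u *m A) 0 j by rewrite mxE.
  by rewrite uA mxE scale0r.
have sB : forall p, p \in s -> B p.2.
  by move=> p /mapP [i _ ->]; apply: sbB; exact: mem_nth.
apply/negP: Hi0; rewrite negbK; apply/eqP/rowP => k.
have := hB s sB s0 (nth 0 sb k).
rewrite /coef big_map big_enum_cond /=.
rewrite (eq_bigl (fun i => i == k)); last first.
  by move=> i; rewrite nth_uniq.
by rewrite big_pred1_eq => h; rewrite [RHS]mxE; exact: h.
Qed.

Lemma lcs_subst (S : W -> seq (K * W)) t :
  lcs (flatten [seq [seq (q.1 * p.1, p.2) | p <- S q.2] | q <- t]) =
  \sum_(q <- t) q.1 *: lcs (S q.2).
Proof.
elim: t => [|q t IH]; first by rewrite /= lcs_nil big_nil.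
by rewrite /= lcs_cat IH big_cons lcs_scale.
Qed.

Local Open Scope card_scope.

Lemma wbasis_le B C : wbasis B -> wbasis C -> B #<= C.
Proof.
move=> [hBi hBs] [hCi hCs].
case: (pselect (finite_set C)) => [Cfin|Cinf].
  have [sc0 Csc0] := (finite_seqP C).1 Cfin.
  pose sc := undup sc0.
  have usc : uniq sc := undup_uniq _.
  have Csc : forall x, C x <-> x \in sc.
    by move=> x; rewrite Csc0 /= mem_undup.
  have bound : forall sb, uniq sb -> (forall b, b \in sb -> B b) ->
      (size sb <= size sc)%N.
    move=> sb usb sbB; apply: (fin_bound hBi usb sbB usc) => b _.
    have [t [tC ->]] := hCs b; exists t; split => // p pt.
    by apply/Csc; exact: tC.
  have Bfin : finite_set B.
    apply: contrapT => Binf.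
    have [F FB Fs] := infinite_set_fset (size sc).+1 Binf.
    have := bound (enum_fset F) (fset_uniq F) (fun b bF => FB b bF).
    by rewrite leqNgt Fs.
  have [sb0 Bsb0] := (finite_seqP B).1 Bfin.
  pose sb := undup sb0.
  have usb : uniq sb := undup_uniq _.
  have Bsb : forall x, B x <-> x \in sb.
    by move=> x; rewrite Bsb0 /= mem_undup.
  have le := bound sb usb (fun b h => (Bsb b).2 h).
  apply: (card_le_fun (f := fun x => nth 0 sc (index x sb))).
    move=> x /Bsb xb; apply/Csc; apply: mem_nth.
    by apply: leq_trans le; rewrite index_mem.
  move=> x y /Bsb xb /Bsb yb /eqP; rewrite nth_uniq //; last 2 first.
  - by apply: leq_trans le; rewrite index_mem.
  - by apply: leq_trans le; rewrite index_mem.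
  by move=> /eqP e; rewrite -(nth_index 0 xb) e nth_index.
pose S w := sval (cid (hBs w)).
have SB : forall w p, p \in S w -> B p.2 by move=> w; case: (svalP (cid (hBs w))).
have Sw : forall w, w = lcs (S w) by move=> w; case: (svalP (cid (hBs w))).
have claim : forall b, B b -> exists c, C c /\ b \in [seq p.2 | p <- S c].
  move=> b Bb; apply: contrapT => nb.
  have [t [tC bt]] := hCs b.
  pose r := flatten [seq [seq (q.1 * p.1, p.2) | p <- S q.2] | q <- t].
  have lr : lcs r = b.
    rewrite lcs_subst bt [RHS]/lcs; apply: eq_bigr => q _; by rewrite -Sw.
  have rB : forall p, p \in r -> B p.2 /\ p.2 != b.
    move=> p /flattenP [l /mapP [q qt ->]] /mapP [p' p'S ->] /=.
    split; first exact: SB p'S.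
    apply/eqP => e; apply: nb; exists q.2; split; first exact: tC.
    by rewrite -e; apply: map_f.
  have := hBi ((-1, b) :: r).
  have h1 : forall p, p \in (-1, b) :: r -> B p.2.
    by move=> p; rewrite inE => /orP [/eqP -> //|/rB []].
  move=> /(_ h1); rewrite lcs_cons lr /= scaleN1r addNr => /(_ erefl b).
  rewrite coef_cons /= eqxx coef_notin ?addr0.
    by move/eqP; rewrite oppr_eq0 oner_eq0.
  by move=> p /rB [].
pose g (x : W) : W * nat :=
  match pselect (exists c, C c /\ x \in [seq p.2 | p <- S c]) with
  | left e => (sval (cid e), index x [seq p.2 | p <- S (sval (cid e))])
  | right _ => (x, 0%N)
  end.
apply: (card_le_trans (B := C `*` [set: nat])); last first.
  apply: infinite_prod_le; exact: Cinf.
apply: (card_le_fun (f := g)).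
  move=> x Bx; rewrite /g; case: pselect => [e|n]; last by case: n; exact: claim.
  by split => //; case: (svalP (cid e)).
move=> x y Bx By; rewrite /g; case: pselect => [e1|n1]; last by case: n1; exact: claim.
case: pselect => [e2|n2]; last by case: n2; exact: claim.
move: (svalP (cid e1)) (svalP (cid e2)).
set c1 := sval (cid e1); set c2 := sval (cid e2) => -[_ x1] [_ y2] [e12 ie].
move: y2 ie; rewrite -e12 => y2 ie.
by rewrite -(nth_index 0 x1) ie nth_index.
Qed.

Lemma wbasis_eq B C : wbasis B -> wbasis C -> B #= C.
Proof. by move=> hB hC; apply: Cantor_Bernstein; apply: wbasis_le. Qed.
End Core.

Lemma sum_eq_seq (K : fieldType) (T : eqType) (s : seq T) (P Q : pred T) (F : T -> K) :
  (forall x, x \in s -> P x = Q x) ->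
  \sum_(x <- s | P x) F x = \sum_(x <- s | Q x) F x.
Proof.
move=> H; rewrite big_seq_cond [RHS]big_seq_cond; apply: eq_bigl => x.
by case: (boolP (x \in s)) => // xs; rewrite /= H.
Qed.

Section Prod.
Variables (K : fieldType) (W1 W2 : lmodType K).

Lemma lcs_fst (s : seq (K * (W1 * W2))) :
  (lcs s).1 = lcs [seq (p.1, p.2.1) | p <- s].
Proof.
elim: s => [|p s IH]; first by rewrite /= !lcs_nil.
by rewrite /= !lcs_cons /= IH.
Qed.

Lemma lcs_snd (s : seq (K * (W1 * W2))) :
  (lcs s).2 = lcs [seq (p.1, p.2.2) | p <- s].
Proof.
elim: s => [|p s IH]; first by rewrite /= !lcs_nil.
by rewrite /= !lcs_cons /= IH.
Qed.

Lemma lcs_inl (t : seq (K * W1)) :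
  lcs [seq (p.1, (p.2, 0 : W2)) | p <- t] = (lcs t, 0).
Proof.
elim: t => [|p t IH]; first by rewrite /= !lcs_nil.
by rewrite /= !lcs_cons IH; congr (_, _); rewrite /= ?scaler0 ?addr0.
Qed.

Lemma lcs_inr (t : seq (K * W2)) :
  lcs [seq (p.1, (0 : W1, p.2)) | p <- t] = (0, lcs t).
Proof.
elim: t => [|p t IH]; first by rewrite /= !lcs_nil.
by rewrite /= !lcs_cons IH; congr (_, _); rewrite /= ?scaler0 ?addr0.
Qed.

Lemma wbasis_prod (B1 : set W1) (B2 : set W2) : wbasis B1 -> wbasis B2 ->
  wbasis ((fun x => (x, 0 : W2)) @` B1 `|` (fun y => (0 : W1, y)) @` B2).
Proof.
move=> [i1 s1] [i2 s2]; split; last first.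
  move=> [v1 v2]; have [t1 [t1B ->]] := s1 v1; have [t2 [t2B ->]] := s2 v2.
  exists ([seq (p.1, (p.2, 0 : W2)) | p <- t1] ++ [seq (p.1, (0 : W1, p.2)) | p <- t2]).
  split; last by rewrite lcs_cat lcs_inl lcs_inr; congr (_, _); rewrite /= ?addr0 ?add0r.
  move=> p; rewrite mem_cat => /orP [/mapP [q qt ->]|/mapP [q qt ->]] /=.
    by left; exists q.2 => //; exact: t1B.
  by right; exists q.2 => //; exact: t2B.
have nz1 := windep_not0 i1; have nz2 := windep_not0 i2.
move=> s sB s0 x.
case: (pselect (exists2 b, B1 b & x = (b, 0))) => [[b Bb ->]|n1].
  have := windep0 i1 (s := [seq (p.1, p.2.1) | p <- s]).
  have h : forall p, p \in [seq (p.1, p.2.1) | p <- s] -> B1 p.2 \/ p.2 = 0.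
    move=> p /mapP [q qs ->] /=; case: (sB q qs) => -[y By <-] /=; by [left|right].
  move=> /(_ h); rewrite -lcs_fst s0 => /(_ erefl b Bb).
  rewrite /coef big_map /= => h0; rewrite -[RHS]h0.
  apply: sum_eq_seq => q qs.
  case: (sB q qs) => -[y By <-] /=; rewrite xpair_eqE ?eqxx ?andbT //.
  have bnz : (0 == b) = false by apply/eqP => e; case: nz1; rewrite e.
  by rewrite ?bnz ?andbF ?andFb.
case: (pselect (exists2 b, B2 b & x = (0, b))) => [[b Bb ->]|n2].
  have := windep0 i2 (s := [seq (p.1, p.2.2) | p <- s]).
  have h : forall p, p \in [seq (p.1, p.2.2) | p <- s] -> B2 p.2 \/ p.2 = 0.
    move=> p /mapP [q qs ->] /=; case: (sB q qs) => -[y By <-] /=; by [right|left].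
  move=> /(_ h); rewrite -lcs_snd s0 => /(_ erefl b Bb).
  rewrite /coef big_map /= => h0; rewrite -[RHS]h0.
  apply: sum_eq_seq => q qs.
  case: (sB q qs) => -[y By <-] /=; rewrite xpair_eqE ?eqxx //.
  have bnz : (0 == b) = false by apply/eqP => e; case: nz2; rewrite e.
  by rewrite ?bnz ?andbF ?andFb.
apply: coef_notin => p ps; apply/eqP => e.
case: (sB p ps) => -[y By ey]; [apply: n1|apply: n2]; exists y => //; by rewrite -e -ey.
Qed.

End Prod.

Section Transport.
Local Open Scope card_scope.
Variables (K : fieldType) (W : lmodType K) (T : Type) (add : T -> T -> T)
  (zero : T) (sm : K -> T -> T) (phi : W -> T).
Hypotheses (phiD : forall x y, phi (x + y) = add (phi x) (phi y))
  (phi0 : phi 0 = zero) (phiZ : forall a x, phi (a *: x) = sm a (phi x))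
  (phiI : injective phi).

Lemma lincomb_phi n (c : 'I_n -> K) (g : 'I_n -> W) :
  phi (\sum_(i < n) c i *: g i) = lincomb add zero sm c (phi \o g).
Proof.
elim: n c g => [|n IH] c g; first by rewrite /lincomb !big_ord0.
rewrite /lincomb !big_ord_recl phiD phiZ; congr add.
exact: (IH (fun i => c (lift ord0 i)) (fun i => g (lift ord0 i))).
Qed.

Lemma transport (U H : set T) : (forall t, U t <-> exists w, phi w = t) ->
  hamel_basis add zero sm U H -> wbasis (phi @^-1` H) /\ (H #= phi @^-1` H).
Proof.
move=> HU [HB [HI HS]].
pose psi t := match pselect (exists w, phi w = t) with
  | left e => sval (cid e) | right _ => 0 end.
have psiK : forall t, U t -> phi (psi t) = t.
  move=> t /HU e; rewrite /psi; case: pselect => [e'|//].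
  exact: (svalP (cid e')).
split; first split.
- apply: lin_indep_windep => n f c finj fB s0.
  apply: (HI n (phi \o f) c) => //.
    by move=> i j /= /phiI; exact: finj.
  by rewrite -lincomb_phi; move: s0; rewrite /lincomb => ->.
- apply: spans_wspan => p _.
  have [n [f [c [fH pe]]]] := HS (phi p) ((HU _).2 (ex_intro _ p erefl)).
  exists n, (psi \o f), c; split.
    by move=> i /=; rewrite /preimage /= psiK //; apply: HB; exact: fH.
  apply: phiI; rewrite pe.
  have fe : f = phi \o (psi \o f).
    by apply: funext => i /=; rewrite psiK //; apply: HB; exact: fH.
  by rewrite [in LHS]fe -lincomb_phi.
- apply: (card_eq_funs (f := psi) (g := phi)).
  + by move=> t Ht; rewrite /preimage /= psiK //; exact: HB.
  + by move=> x y Hx Hy e; rewrite -(psiK x (HB _ Hx)) -(psiK y (HB _ Hy)) e.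
  + by move=> x Hx; exact: Hx.
  + by move=> x y _ _; exact: phiI.
Qed.

End Transport.

Section EvsFacts.
Variables (K : fieldType) (T : Type) (o : evs_ops K T) (Ho : is_evs o).
Local Notation le := (ev_le o).
Local Notation add := (ev_add o).
Local Notation th := (ev_zero o).
Local Notation sm := (ev_smul o).

Lemma le_prim_eq y z : le y z -> prim o z -> y = z.
Proof. by move=> yz pz; apply: contrapT => nyz; exact: pz y nyz yz. Qed.

Lemma smul_th a : sm a th = th.
Proof. by apply/(ev_smul_eq0 Ho); right. Qed.

Lemma smul_0 x : sm 0 x = th.
Proof. by apply/(ev_smul_eq0 Ho); left. Qed.

Lemma add_th x : add x th = x.
Proof. by rewrite (ev_addC Ho) (ev_add0 Ho). Qed.

Lemma add4 a b c d : add (add a b) (add c d) = add (add a c) (add b d).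
Proof.
rewrite -(ev_addA Ho) [add b (add c d)](ev_addA Ho) [add b c](ev_addC Ho).
by rewrite -(ev_addA Ho) (ev_addA Ho).
Qed.

Lemma prim_th : prim o th.
Proof. by apply/(ev_inv_prim Ho); rewrite smul_th (ev_add0 Ho). Qed.

Lemma prim_add p q : prim o p -> prim o q -> prim o (add p q).
Proof.
move=> /(ev_inv_prim Ho) hp /(ev_inv_prim Ho) hq; apply/(ev_inv_prim Ho).
by rewrite (ev_smulD Ho) add4 hp hq (ev_add0 Ho).
Qed.

Lemma prim_smul a p : prim o p -> prim o (sm a p).
Proof.
move=> /(ev_inv_prim Ho) hp; apply/(ev_inv_prim Ho).
rewrite (ev_smulA Ho) mulrC -(ev_smulA Ho) -(ev_smulD Ho) hp; exact: smul_th.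
Qed.

Lemma prim_smulDl a b p : prim o p -> sm (a + b) p = add (sm a p) (sm b p).
Proof.
move=> pp; apply: le_prim_eq; first exact: (ev_smul_addle Ho).
by apply: prim_add; apply: prim_smul.
Qed.

Lemma Lset_refl x : Lset o x x.
Proof.
exists 1, th; split; [apply/eqP; exact: oner_neq0 | exact: prim_th|].
by rewrite (ev_smul1 Ho) add_th; exact: (ev_le_refl Ho).
Qed.

Lemma Lset_trans x y z : Lset o y x -> Lset o z y -> Lset o z x.
Proof.
move=> [a [p [a0 pp le1]]] [b [q [b0 pq le2]]].
exists (a * b), (add (sm a q) p); split.
- by apply/eqP; rewrite mulf_neq0 //; apply/eqP.
- by apply: prim_add => //; exact: prim_smul.
apply: (ev_le_trans Ho) le1.
have := (ev_le_add Ho p (ev_le_smul Ho a le2)).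
by rewrite (ev_smulD Ho) (ev_smulA Ho) (ev_addA Ho).
Qed.

End EvsFacts.

Definition PT (K : fieldType) (T : Type) (o : evs_ops K T) (Ho : is_evs o) :=
  {x : T | prim o x}.

HB.instance Definition _ (K : fieldType) (T : Type) (o : evs_ops K T) (Ho : is_evs o) :=
  gen_eqMixin (PT Ho).
HB.instance Definition _ (K : fieldType) (T : Type) (o : evs_ops K T) (Ho : is_evs o) :=
  gen_choiceMixin (PT Ho).

Section PTops.
Variables (K : fieldType) (T : Type) (o : evs_ops K T) (Ho : is_evs o).

Definition pt_zero : PT Ho := exist _ (ev_zero o) (prim_th Ho).
Definition pt_add (x y : PT Ho) : PT Ho :=
  exist _ (ev_add o (sval x) (sval y)) (prim_add Ho (svalP x) (svalP y)).
Definition pt_sm (a : K) (x : PT Ho) : PT Ho :=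
  exist _ (ev_smul o a (sval x)) (@prim_smul K T o Ho a _ (svalP x)).
Definition pt_opp (x : PT Ho) : PT Ho := pt_sm (-1) x.

Lemma pt_addA : associative pt_add.
Proof. by move=> x y z; apply: eq_exist; rewrite /= (ev_addA Ho). Qed.
Lemma pt_addC : commutative pt_add.
Proof. by move=> x y; apply: eq_exist; rewrite /= (ev_addC Ho). Qed.
Lemma pt_add0 : left_id pt_zero pt_add.
Proof. by move=> x; case: x => x px; apply: eq_exist; rewrite /= (ev_add0 Ho). Qed.
Lemma pt_addN : left_inverse pt_zero pt_opp pt_add.
Proof.
move=> [x px]; apply: eq_exist => /=; rewrite (ev_addC Ho).
exact/(ev_inv_prim Ho).
Qed.

HB.instance Definition _ := GRing.isZmodule.Build (PT Ho) pt_addA pt_addC pt_add0 pt_addN.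

Lemma pt_smA a b (v : PT Ho) : pt_sm a (pt_sm b v) = pt_sm (a * b) v.
Proof. by apply: eq_exist; rewrite /= (ev_smulA Ho). Qed.
Lemma pt_sm1 : left_id 1 pt_sm.
Proof. by move=> [x px]; apply: eq_exist; rewrite /= (ev_smul1 Ho). Qed.
Lemma pt_smDr : right_distributive pt_sm +%R.
Proof. by move=> a x y; apply: eq_exist; rewrite /= (ev_smulD Ho). Qed.
Lemma pt_smDl (v : PT Ho) : {morph pt_sm^~ v : a b / a + b}.
Proof. by move=> a b; apply: eq_exist; rewrite /= (@prim_smulDl K T o Ho a b _ (svalP v)). Qed.

HB.instance Definition _ := GRing.Zmodule_isLmodule.Build K (PT Ho) pt_smA pt_sm1 pt_smDr pt_smDl.

End PTops.

Section ProdEvs.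
Local Open Scope card_scope.
Variables (K : fieldType) (T : Type) (o : evs_ops K T) (Ho : is_evs o) (V : lmodType K).
Local Notation po := (prod_ops o V).

Lemma prim_prodP (u : T * V) : prim po u <-> prim o u.1.
Proof.
split.
  move=> hp y yn le; apply: (hp (y, u.2)); last by split.
  by move=> e; apply: yn; rewrite -e.
move=> hp [y1 y2] yn [/= le e]; apply: yn.
have := le_prim_eq le hp; case: u hp e le => /= ? ? ? -> ? ->; done.
Qed.

Lemma Lset_prodP (u w : T * V) : Lset po u w <-> Lset o u.1 w.1.
Proof.
split.
  move=> [a [[p q] [a0 pp le]]]; exists a, p; split => //.
    by move/prim_prodP: pp.
  by case: le.
move=> [a [p [a0 pp le]]]; exists a, (p, w.2 - a *: u.2); split => //.
  exact/prim_prodP.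
by split => //=; rewrite addrC subrK.
Qed.

Lemma basis_fst B' : evs_basis po B' -> evs_basis o (fst @` B').
Proof.
move=> [B'np [B'ind [_ B'gen]]].
have np : fst @` B' `<=` ~` prim o.
  by move=> _ [u Bu <-] pu; apply: (B'np u Bu); exact/prim_prodP.
split => //; split.
  move=> _ _ [u Bu <-] [v Bv <-] uv dep; apply: (B'ind u v Bu Bv).
    by move=> e; apply: uv; rewrite e.
  by case: dep => h; [left|right]; exact/Lset_prodP.
split => //; apply/seteqP; split.
  move=> x nx.
  have : (~` prim po) (x, 0) by move/prim_prodP.
  rewrite B'gen => -[u Bu Lu]; exists u.1; first by exists u.
  exact: (proj1 (Lset_prodP _ _) Lu).
move=> x [_ [u Bu <-] Lx].
have : (\bigcup_(b in B') Lset po b) (x, u.2).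
  by exists u => //; apply/Lset_prodP.
by rewrite -B'gen => h hx; apply: h; exact/prim_prodP.
Qed.

Lemma basis_pair B : evs_basis o B -> evs_basis po ((fun b => (b, 0)) @` B).
Proof.
move=> [Bnp [Bind [_ Bgen]]].
have np : (fun b => (b, 0 : V)) @` B `<=` ~` prim po.
  by move=> _ [b Bb <-] /prim_prodP; exact: Bnp.
split => //; split.
  move=> _ _ [b Bb <-] [c Cc <-] bc dep; apply: (Bind b c Bb Cc).
    by move=> e; apply: bc; rewrite e.
  by case: dep => h; [left|right]; exact: (proj1 (Lset_prodP _ _) h).
split => //; apply/seteqP; split.
  move=> u nu.
  have : (~` prim o) u.1 by move=> h; apply: nu; exact/prim_prodP.
  rewrite Bgen => -[b Bb Lb]; exists (b, 0); first by exists b.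
  exact/Lset_prodP.
move=> u [_ [b Bb <-] Lu] h.
have : (\bigcup_(b in B) Lset o b) u.1.
  by exists b => //; exact: (proj1 (Lset_prodP _ _) Lu).
by rewrite -Bgen; apply; exact/prim_prodP.
Qed.

Lemma basis_le B C : evs_basis o B -> evs_basis o C -> B #<= C.
Proof.
move=> [Bnp [Bind [_ Bgen]]] [Cnp [Cind [_ Cgen]]].
have key : forall b, B b -> exists c, C c /\ Lset o c b.
  move=> b Bb; have : (~` prim o) b by exact: Bnp.
  by rewrite Cgen => -[c Cc Lc]; exists c.
have key2 : forall b c, B b -> C c -> Lset o c b -> Lset o b c.
  move=> b c Bb Cc Lcb; have : (~` prim o) c by exact: Cnp.
  rewrite Bgen => -[b' Bb' Lb'c].
  have Lb'b := Lset_trans Ho Lcb Lb'c.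
  case: (pselect (b' = b)) => [<- //|nb].
  by exfalso; apply: (Bind b b' Bb Bb'); [move=> e; apply: nb; rewrite e|left].
pose f b := match pselect (exists c, C c /\ Lset o c b) with
  | left e => sval (cid e) | right _ => b end.
apply: (card_le_fun (f := f)).
  move=> b Bb; rewrite /f; case: pselect => [e|n]; last by case: n; exact: key.
  by case: (svalP (cid e)).
move=> b1 b2 B1 B2; rewrite /f; case: pselect => [e1|n]; last by case: n; exact: key.
case: pselect => [e2|n]; last by case: n; exact: key.
move: (svalP (cid e1)) (svalP (cid e2)).
set c1 := sval (cid e1); set c2 := sval (cid e2) => -[C1 L1] [C2 L2] e.
move: C2 L2; rewrite -e => C2 L2.
have Lb1c := key2 _ _ B1 C1 L1.
have L12 := Lset_trans Ho L2 Lb1c.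
apply: contrapT => nb; apply: (Bind b2 b1 B2 B1); [by move=> e'; apply: nb; rewrite e'|by left].
Qed.

Lemma basis_card B C : evs_basis o B -> evs_basis o C -> B #= C.
Proof. by move=> hB hC; apply: Cantor_Bernstein; exact: basis_le. Qed.

Lemma fst_card B' : evs_basis po B' -> B' #= fst @` B'.
Proof.
move=> [B'np [B'ind _]]; apply: Cantor_Bernstein; last exact: card_image_le.
apply: (card_le_fun (f := fst)); first by move=> u Bu; exists u.
move=> u v Bu Bv e; apply: contrapT => uv; apply: (B'ind u v Bu Bv uv).
by left; apply/Lset_prodP; rewrite e; exact: Lset_refl.
Qed.

End ProdEvs.

Section Hamel2.
Local Open Scope card_scope.
Variables (K : fieldType) (T : Type) (o : evs_ops K T) (Ho : is_evs o) (V : lmodType K).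
Local Notation po := (prod_ops o V).

Lemma hamel_card (H : set (T * V)) (H1 : set T) (H2 : set V) :
  prim_hamel_basis po H -> prim_hamel_basis o H1 -> vs_hamel_basis H2 ->
  H #= ([set inl x | x in H1] `|` [set inr v | v in H2]).
Proof.
move=> hH hH1 hH2.
pose W := (PT Ho * V)%type.
pose phi (w : W) : T * V := (sval w.1, w.2).
have [HWb HHW] := @transport K W (T * V) (ev_add po) (ev_zero po) (ev_smul po) phi
  (fun x y => erefl) erefl (fun a x => erefl)
  ltac:(by move=> [[x1 p1] x2] [[y1 q1] y2] /= [e1 e2]; subst; congr pair; exact: eq_exist)
  (prim po) H
  ltac:(move=> t; split; [move/prim_prodP => h; exists (exist _ t.1 h, t.2); by case: t h|
        by move=> [w <-]; apply/prim_prodP; exact: (svalP w.1)]) hH.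
have [B1b HB1] := @transport K (PT Ho) T (ev_add o) (ev_zero o) (ev_smul o) sval
  (fun x y => erefl) erefl (fun a x => erefl)
  ltac:(by move=> [x1 p1] [y1 q1] /= e1; subst; exact: eq_exist)
  (prim o) H1
  ltac:(move=> t; split; [move=> h; by exists (exist _ t h)| by move=> [w <-]; exact: (svalP w)]) hH1.
have H2b : wbasis H2.
  by case: hH2 => _ [hi hs]; split; [exact: lin_indep_windep | exact: spans_wspan].
have nz2 : ~ H2 0 by exact: windep_not0 H2b.1.
pose B : set W := (fun x => (x, 0 : V)) @` (sval @^-1` H1) `|` (fun y => (0 : PT Ho, y)) @` H2.
have Bb : wbasis B by exact: wbasis_prod.
apply: card_eq_trans HHW _.
apply: card_eq_trans (wbasis_eq HWb Bb) _.
pose f (w : W) : T + V := match pselect (w.2 = 0) with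
  | left _ => inl (sval w.1) | right _ => inr w.2 end.
pose psi1 (t : T) : PT Ho := match pselect (prim o t) with
  | left h => exist _ t h | right _ => 0 end.
pose g (z : T + V) : W := match z with inl t => (psi1 t, 0) | inr v => (0, v) end.
have H1p : forall t, H1 t -> prim o t by move=> t /(proj1 hH1).
have fL : forall x, f (x, 0) = inl (sval x) by move=> x; rewrite /f /=; case: pselect.
have fR : forall y, H2 y -> f (0, y) = inr y.
  by move=> y Hy; rewrite /f /=; case: pselect => // e; case: nz2; rewrite -e.
apply: (card_eq_funs (f := f) (g := g)).
- move=> w [[x Hx <-]|[y Hy <-]]; [rewrite fL; left; by exists (sval x)|].
  by rewrite fR //; right; exists y.
- move=> w1 w2 [[x Hx <-]|[y Hy <-]] [[x' Hx' <-]|[y' Hy' <-]];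
    rewrite ?fL ?fR //.
  + move=> [e]; congr pair; move: x x' Hx Hx' e => [x px] [x' px'] /= _ _ e.
    by subst; exact: eq_exist.
  + by move=> [->].
- move=> z [[t Ht <-]|[v Hv <-]] /=; last by right; exists v.
  left; exists (psi1 t) => //; rewrite /psi1; case: pselect => [h|n] //=.
  by case: n; exact: H1p.
- move=> z1 z2 [[t Ht <-]|[v Hv <-]] [[t' Ht' <-]|[v' Hv' <-]] /=.
  + move=> [e]; move: e; rewrite /psi1; case: pselect => [h|n]; last by case: n; exact: H1p.
    case: pselect => [h'|n]; last by case: n; exact: H1p.
    by move=> /(congr1 sval) /= ->.
  + by move=> [_ e]; case: nz2; rewrite e.
  + by move=> [_ e]; case: nz2; rewrite -e.
  + by move=> [->].
Qed.

End Hamel2.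

Lemma thm8_all (K : fieldType) : thm8_for K.
Proof.
move=> T o V Ho; split.
  split.
    by move=> [B' hB']; exists (fst @` B'); exact: basis_fst hB'.
  move=> [B hB]; exists ((fun b => (b, 0 : V)) @` B). exact: (@basis_pair K T o V B hB).
move=> B B' hB hB'; split.
  exact: card_eq_trans (fst_card Ho hB') (basis_card Ho (basis_fst hB') hB).
by move=> H H1 H2; exact: (@hamel_card K T o Ho V H H1 H2).
Qed.

Theorem mainTheorem8 (R : realType) : thm8_for R /\ thm8_for R[i].
Proof. by split; apply: thm8_all. Qed.
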